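(* Assume $\delta=d$ and $\gamma\ge1$. Then $$\frac{q(z,w)}{z^\gamma w^d}\longrightarrow1\quad\text{as } (z,w)\in W_R,\ R\to\infty$$ (i.e. as $|z|\to\infty$ and $|w|/|z|^\alpha\to\infty$ when $\alpha>-\infty$, and as $|z|\to\infty$ with $w\ne0$ when $\alpha=-\infty$), and there is $R_0>1$ such that $f(W_R)\subset W_R$ for all $R\ge R_0$.
   Context: Let $p(z)=z^d+O(z^{d-1})$ be a monic polynomial of degree $\delta=d\ge 2$, and let $q(z,w)=b(z)w^d+(\text{terms of lower degree in } w)$ be a polynomial with $\deg_w q=d$, where $b$ is a monic polynomial of degree $\gamma$. Let $f(z,w)=(p(z),q(z,w))$. Define $\alpha=\max\{(n_j-\gamma)/(d-m_j)\}$ over monomials $z^{n_j}w^{m_j}$ appearing in $q$ with nonzero coefficient and $m_j<d$, and $\alpha=-\infty$ if $q(z,w)=b(z)w^d$. Let $W_R=\{(z,w):|z|>R,\ |w|>R|z|^\alpha\}$ if $\alpha>-\infty$, and $W_R=\{(z,w):|z|>R,\ w\ne0\}$ if $\alpha=-\infty$. *)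

(* Defs.v *)
From Stdlib Require Import Reals List.
Open Scope R_scope.

Definition Cx : Type := (R * R)%type.
Definition Czero : Cx := (0, 0).
Definition Cone : Cx := (1, 0).
Definition Cadd (a b : Cx) : Cx := (fst a + fst b, snd a + snd b).
Definition Copp (a : Cx) : Cx := (- fst a, - snd a).
Definition Cmul (a b : Cx) : Cx :=
  (fst a * fst b - snd a * snd b, fst a * snd b + snd a * fst b).
Definition Cinv (a : Cx) : Cx :=
  (fst a / (fst a ^ 2 + snd a ^ 2), - snd a / (fst a ^ 2 + snd a ^ 2)).
Definition Cdiv (a b : Cx) : Cx := Cmul a (Cinv b).
Definition Cmod (a : Cx) : R := sqrt (fst a ^ 2 + snd a ^ 2).
Fixpoint Cpow (a : Cx) (n : nat) : Cx :=
  match n with O => Cone | S k => Cmul a (Cpow a k) end.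

Definition Ceq_dec (a b : Cx) : {a = b} + {a <> b}.
Proof. decide equality; apply Req_EM_T. Defined.

Definition sum_upto (N : nat) (f : nat -> Cx) : Cx :=
  fold_right (fun k acc => Cadd (f k) acc) Czero (seq 0 (S N)).

Definition peval (N : nat) (a : nat -> Cx) (z : Cx) : Cx :=
  sum_upto N (fun n => Cmul (a n) (Cpow z n)).

Definition qeval (N M : nat) (c : nat -> nat -> Cx) (z w : Cx) : Cx :=
  sum_upto N (fun n => sum_upto M (fun m =>
    Cmul (c n m) (Cmul (Cpow z n) (Cpow w m)))).

(* Extended reals max, None = -infinity. *)
Definition omax (x : option R) (y : R) : option R :=
  match x with None => Some y | Some x' => Some (Rmax x' y) end.

(* alpha = max { (n_j - gamma)/(d - m_j) : c n_j m_j <> 0, m_j < d },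
   over n_j <= N (all nonzero coefficients have n_j <= N); None = -infinity. *)
Definition alpha_of (N d gamma : nat) (c : nat -> nat -> Cx) : option R :=
  fold_left (fun acc n =>
    fold_left (fun acc' m =>
      if Ceq_dec (c n m) Czero then acc'
      else omax acc' ((INR n - INR gamma) / (INR d - INR m)))
      (seq 0 d) acc)
    (seq 0 (S N)) None.

Definition inW (alpha : option R) (Rr : R) (z w : Cx) : Prop :=
  Cmod z > Rr /\
  match alpha with
  | Some a => Cmod w > Rr * Rpower (Cmod z) a
  | None => w <> Czero
  end.

(* Main.v *)
Require Import Defs.
From Stdlib Require Import Reals List.
From Stdlib Require Import Lia Lra Psatz Arith.
From Coquelicot Require Complex.
Open Scope R_scope.

Lemma Cx_ext (a b : Cx) : fst a = fst b -> snd a = snd b -> a = b.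
Proof. destruct a, b; simpl; intros; subst; auto. Qed.

Lemma Cmod_mul a b : Cmod (Cmul a b) = Cmod a * Cmod b.
Proof. exact (Complex.Cmod_mult a b). Qed.
Lemma Cmod_add a b : Cmod (Cadd a b) <= Cmod a + Cmod b.
Proof. exact (Complex.Cmod_triangle a b). Qed.
Lemma Cmod_opp a : Cmod (Copp a) = Cmod a.
Proof. exact (Complex.Cmod_opp a). Qed.
Lemma Cmod_ge0 a : 0 <= Cmod a.
Proof. exact (Complex.Cmod_ge_0 a). Qed.
Lemma Cmod_zero : Cmod Czero = 0.
Proof. exact Complex.Cmod_0. Qed.
Lemma Cmod_one : Cmod Cone = 1.
Proof. exact Complex.Cmod_1. Qed.
Lemma Cmod_pos a : a <> Czero -> 0 < Cmod a.
Proof. intro H. apply (Complex.Cmod_gt_0 a). exact H. Qed.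
Lemma Cmod_pos_ne a : 0 < Cmod a -> a <> Czero.
Proof. intros H E; subst; rewrite Cmod_zero in H; lra. Qed.
Lemma Cmod_pow a n : Cmod (Cpow a n) = Cmod a ^ n.
Proof. induction n; simpl. apply Cmod_one. rewrite Cmod_mul, IHn; auto. Qed.
Lemma Cmod_div a b : b <> Czero -> Cmod (Cdiv a b) = Cmod a / Cmod b.
Proof. intro H. unfold Cdiv, Rdiv. rewrite Cmod_mul.
  change (Cmod a * Complex.Cmod (Complex.Cinv b) = Cmod a * / Cmod b).
  rewrite (Complex.Cmod_inv b H). reflexivity. Qed.
Module FF.
Import Complex.
Lemma Cdiv_id0 (S D : C) : D <> RtoC 0 -> Cplus (Complex.Cdiv (Cplus S D) D) (Complex.Copp (RtoC 1)) = Complex.Cdiv S D.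
Proof. intro H. field. exact H. Qed.
End FF.
Lemma Cdiv_id S D : D <> Czero -> Cadd (Cdiv (Cadd S D) D) (Copp Cone) = Cdiv S D.
Proof. intro H. exact (FF.Cdiv_id0 S D H). Qed.
Lemma Cmul_one_l a : Cmul Cone a = a.
Proof. destruct a; apply Cx_ext; simpl; ring. Qed.
Lemma Cadd_zero_r a : Cadd a Czero = a.
Proof. destruct a; apply Cx_ext; simpl; ring. Qed.
Lemma Cadd_assoc a b c : Cadd a (Cadd b c) = Cadd (Cadd a b) c.
Proof. apply Cx_ext; simpl; ring. Qed.
Lemma Cadd_comm a b : Cadd a b = Cadd b a.
Proof. apply Cx_ext; simpl; ring. Qed.
Lemma Cone_ne : Cone <> Czero.
Proof. intro H. injection H. lra. Qed.
Lemma Cmod_lower a b : Cmod (Cadd a b) >= Cmod b - Cmod a.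
Proof.
  assert (Hb : b = Cadd (Cadd a b) (Copp a)) by (apply Cx_ext; simpl; ring).
  pose proof (Cmod_add (Cadd a b) (Copp a)). rewrite <- Hb, Cmod_opp in H. lra. Qed.

Lemma fold_shift (f : nat -> Cx) l a :
  fold_right (fun k acc => Cadd (f k) acc) a l =
  Cadd (fold_right (fun k acc => Cadd (f k) acc) Czero l) a.
Proof. induction l; simpl. apply Cx_ext; simpl; ring. rewrite IHl. apply Cadd_assoc. Qed.

Lemma sum_S N f : sum_upto (S N) f = Cadd (sum_upto N f) (f (S N)).
Proof. unfold sum_upto. rewrite seq_S, fold_right_app. rewrite fold_shift. f_equal.
  simpl. apply Cadd_zero_r. Qed.
Lemma sum_0 f : sum_upto 0 f = Cadd (f 0%nat) Czero.
Proof. reflexivity. Qed.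

Lemma sum_ext N f g : (forall k, (k <= N)%nat -> f k = g k) -> sum_upto N f = sum_upto N g.
Proof. induction N; intros H. rewrite !sum_0, H; auto.
  rewrite !sum_S, IHN, H; auto. Qed.

Lemma sum_extract N f j : (j <= N)%nat ->
  sum_upto N f = Cadd (sum_upto N (fun k => if Nat.eqb k j then Czero else f k)) (f j).
Proof. induction N; intros Hj.
  - assert (j = 0%nat) by lia; subst. rewrite !sum_0. simpl. apply Cx_ext; simpl; ring.
  - rewrite !sum_S. destruct (Nat.eq_dec j (S N)).
    + subst. rewrite Nat.eqb_refl.
      rewrite (sum_ext N (fun k => if Nat.eqb k (S N) then Czero else f k) f).
      apply Cx_ext; simpl; ring.
      intros k Hk. destruct (Nat.eqb_spec k (S N)); [lia|auto].
    + rewrite IHN by lia. destruct (Nat.eqb_spec (S N) j); [lia|].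
      apply Cx_ext; simpl; ring. Qed.

Lemma Cmod_sum N f : Cmod (sum_upto N f) <= sum_f_R0 (fun k => Cmod (f k)) N.
Proof. induction N.
  - rewrite sum_0. simpl. pose proof (Cmod_add (f 0%nat) Czero). rewrite Cmod_zero in H. lra.
  - rewrite sum_S. simpl. pose proof (Cmod_add (sum_upto N f) (f (S N))). lra. Qed.

Lemma sum_scal f x N : sum_f_R0 (fun k => f k * x) N = sum_f_R0 f N * x.
Proof. induction N; simpl; auto. rewrite IHN; ring. Qed.

Definition ge_opt (r : option R) (x : R) := exists a, r = Some a /\ x <= a.

Lemma fold_pres {A : Type} (F : option R -> A -> option R)
  (HF : forall acc a x, ge_opt acc x -> ge_opt (F acc a) x) :
  forall l acc x, ge_opt acc x -> ge_opt (fold_left F l acc) x.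
Proof. induction l; simpl; intros; auto. Qed.

Lemma fold_in {A : Type} (F : option R -> A -> option R)
  (HF : forall acc a x, ge_opt acc x -> ge_opt (F acc a) x)
  (P : A -> Prop) (g : A -> R) (HP : forall acc a, P a -> ge_opt (F acc a) (g a)) :
  forall l acc a, In a l -> P a -> ge_opt (fold_left F l acc) (g a).
Proof. induction l; simpl; intros acc b Hin HPb. contradiction.
  destruct Hin as [<-|Hin]. apply fold_pres; auto. apply IHl; auto. Qed.

Lemma omax_new acc y : ge_opt (omax acc y) y.
Proof. destruct acc; simpl; eexists; split; eauto. apply Rmax_r. lra. Qed.
Lemma omax_old acc y x : ge_opt acc x -> ge_opt (omax acc y) x.
Proof. intros [a [-> H]]. simpl. eexists; split; eauto. eapply Rle_trans; eauto. apply Rmax_l. Qed.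

Lemma alpha_lemma N d gamma c n m : (n <= N)%nat -> (m < d)%nat -> c n m <> Czero ->
  ge_opt (alpha_of N d gamma c) ((INR n - INR gamma) / (INR d - INR m)).
Proof. intros Hn Hm Hc. unfold alpha_of.
  set (Fi := fun (n0 : nat) (acc' : option R) (m0 : nat) =>
     if Ceq_dec (c n0 m0) Czero then acc'
     else omax acc' ((INR n0 - INR gamma) / (INR d - INR m0))).
  assert (HFi : forall n0 acc a x, ge_opt acc x -> ge_opt (Fi n0 acc a) x).
  { intros. unfold Fi. destruct Ceq_dec; auto. apply omax_old; auto. }
  change (ge_opt (fold_left (fun acc n0 => fold_left (Fi n0) (seq 0 d) acc) (seq 0 (S N)) None)
     ((INR n - INR gamma) / (INR d - INR m))).
  refine (fold_in _ (fun acc a x H => fold_pres (Fi a) (HFi a) (seq 0 d) acc x H)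
     (fun n0 => n0 = n) (fun _ => (INR n - INR gamma) / (INR d - INR m)) _ (seq 0 (S N)) None n _ _).
  - intros acc a ->.
    refine (fold_in (Fi n) (HFi n) (fun m0 => m0 = m) (fun m0 => (INR n - INR gamma) / (INR d - INR m0)) _ (seq 0 d) acc m _ _).
    + intros acc' a' ->. unfold Fi. destruct Ceq_dec. contradiction. apply omax_new.
    + apply in_seq. lia.
    + reflexivity.
  - apply in_seq. lia.
  - reflexivity.
Qed.

Lemma exp_le' x y : x <= y -> exp x <= exp y.
Proof. intros [H|H]. left; apply exp_increasing; auto. subst; lra. Qed.
Lemma ln_le' x y : 0 < x -> x <= y -> ln x <= ln y.
Proof. intros Hx [H|H]. left; apply ln_increasing; auto. subst; lra. Qed.
Lemma exp_pow' x k : exp x ^ k = exp (INR k * x).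
Proof. induction k. simpl. rewrite Rmult_0_l, exp_0; auto.
  rewrite S_INR. simpl pow. rewrite IHk, <- exp_plus. f_equal; ring. Qed.
Lemma pow_strict x y n : 0 <= x -> x < y -> (1 <= n)%nat -> x ^ n < y ^ n.
Proof. intros Hx Hxy Hn. induction n. lia. destruct n. simpl; lra.
  simpl pow in *. assert (0 <= x ^ S n) by (apply pow_le; auto).
  assert (x * x ^ n < y * y ^ n) by (apply IHn; lia). simpl in *. nra. Qed.
Lemma pow_ge_x x n : 1 <= x -> (1 <= n)%nat -> x <= x ^ n.
Proof. intros Hx Hn. destruct n. lia. simpl. assert (1 <= x ^ n) by (apply pow_R1_Rle; auto). nra. Qed.
Lemma le_div x y r : 0 < r -> x * r <= y -> x <= y / r.
Proof. intros Hr H. apply (Rmult_le_reg_r r); auto. unfold Rdiv. rewrite Rmult_assoc, Rinv_l; lra. Qed.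
Lemma pow_exp_ln Z n : 0 < Z -> Z ^ n = exp (INR n * ln Z).
Proof. intros. rewrite <- ln_pow by auto. rewrite exp_ln; auto. apply pow_lt; auto. Qed.

Lemma TB d gamma N c
  (Hq_supp_z : forall n m, (N < n)%nat -> c n m = Czero)
  (Hq_supp_w : forall n m, (d < m)%nat -> c n m = Czero)
  (Hb_deg : forall n, (gamma < n)%nat -> c n d = Czero)
  Rr z w n m :
  1 <= Rr -> inW (alpha_of N d gamma c) Rr z w -> (n <> gamma \/ m <> d) ->
  Cmod (c n m) * (Cmod z ^ n * Cmod w ^ m) <= Cmod (c n m) * (Cmod z ^ gamma * Cmod w ^ d / Rr).
Proof.
  intros HR [HZ HW] Hnm.
  destruct (Ceq_dec (c n m) Czero) as [E|Hc]. rewrite E, Cmod_zero; lra.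
  apply Rmult_le_compat_l. apply Cmod_ge0.
  assert (Hn : (n <= N)%nat). { destruct (le_lt_dec n N); auto. exfalso; apply Hc; auto. }
  assert (Hm : (m <= d)%nat). { destruct (le_lt_dec m d); auto. exfalso; apply Hc; auto. }
  set (Z := Cmod z) in *. set (W := Cmod w) in *.
  assert (HZ1 : 1 <= Z) by lra. assert (HZ0 : 0 < Z) by lra.
  assert (HW0 : 0 < W).
  { destruct (alpha_of N d gamma c) as [a|].
    - unfold Rpower in HW. pose proof (exp_pos (a * ln Z)). nra.
    - apply Cmod_pos; auto. }
  apply le_div. lra.
  assert (HWm : 0 <= W ^ m) by (apply pow_le; lra).
  assert (HZn : 0 < Z ^ n) by (apply pow_lt; lra).
  destruct (Nat.eq_dec m d) as [->|Hmd].
  - assert (Hng : (n < gamma)%nat).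
    { destruct Hnm as [H|H]; [|congruence]. destruct (le_lt_dec gamma n).
      exfalso; apply Hc; apply Hb_deg; lia. auto. }
    replace gamma with (n + (gamma - n))%nat by lia. rewrite pow_add.
    assert (Z <= Z ^ (gamma - n)) by (apply pow_ge_x; auto; lia).
    assert (0 <= (Z ^ (gamma - n) - Rr) * (Z ^ n * W ^ d)) by (apply Rmult_le_pos; nra).
    nra.
  - assert (Hmd' : (m < d)%nat) by lia.
    destruct (alpha_lemma N d gamma c n m Hn Hmd' Hc) as [a [Ha Hle]].
    rewrite Ha in HW. unfold Rpower in HW.
    set (k := (d - m)%nat).
    assert (Hk : INR d - INR m = INR k) by (unfold k; rewrite minus_INR; lia || lra).
    assert (Hk0 : 0 < INR k) by (apply lt_0_INR; unfold k; lia).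
    rewrite Hk in Hle.
    assert (Hka : INR n - INR gamma <= INR k * a).
    { apply (Rmult_le_compat_l (INR k)) in Hle; [|lra].
      unfold Rdiv in Hle. rewrite <- Rmult_assoc, (Rmult_comm (INR k)), Rmult_assoc, Rinv_r in Hle; lra. }
    assert (HlnZ : 0 <= ln Z) by (rewrite <- ln_1; apply ln_le'; lra).
    set (e := exp (a * ln Z)) in *.
    assert (He : 0 < e) by apply exp_pos.
    replace d with (m + k)%nat by (unfold k; lia). rewrite pow_add.
    assert (HWk : (Rr * e) ^ k <= W ^ k) by (apply pow_incr; nra).
    rewrite Rpow_mult_distr in HWk. unfold e in HWk. rewrite exp_pow' in HWk.
    assert (HRk : Rr <= Rr ^ k) by (apply pow_ge_x; auto; unfold k; lia).
    assert (Hexp : exp ((INR n - INR gamma) * ln Z) <= exp (INR k * (a * ln Z))).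
    { apply exp_le'. nra. }
    assert (Hid : Z ^ gamma * exp ((INR n - INR gamma) * ln Z) = Z ^ n).
    { rewrite !(pow_exp_ln Z) by auto. rewrite <- exp_plus. f_equal; ring. }
    assert (HZg : 0 < Z ^ gamma) by (apply pow_lt; lra).
    pose proof (exp_pos ((INR n - INR gamma) * ln Z)).
    pose proof (exp_pos (INR k * (a * ln Z))).
    assert (0 <= Rr ^ k) by (apply pow_le; lra).
    assert (Z ^ gamma * (Rr ^ k * exp (INR k * (a * ln Z))) <= Z ^ gamma * W ^ k)
      by (apply Rmult_le_compat_l; lra).
    assert (Z ^ n * Rr <= Z ^ gamma * (Rr ^ k * exp (INR k * (a * ln Z)))).
    { rewrite <- Hid. assert (Rr * exp ((INR n - INR gamma) * ln Z) <= Rr ^ k * exp (INR k * (a * ln Z))).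
      apply Rmult_le_compat; lra. nra. }
    nra.
Qed.

Definition Kq N d gamma (c : nat -> nat -> Cx) :=
  sum_f_R0 (fun n => sum_f_R0 (fun m => Cmod (c n m)) d) N +
  sum_f_R0 (fun m => Cmod (c gamma m)) d.

Lemma Kq_ge0 N d gamma c : 0 <= Kq N d gamma c.
Proof. unfold Kq. assert (forall n, 0 <= sum_f_R0 (fun m => Cmod (c n m)) d)
  by (intros; apply cond_pos_sum; intros; apply Cmod_ge0).
  pose proof (cond_pos_sum _ N H). pose proof (H gamma). lra. Qed.

Lemma Cmod_T (a z w : Cx) n m : Cmod (Cmul a (Cmul (Cpow z n) (Cpow w m))) = Cmod a * (Cmod z ^ n * Cmod w ^ m).
Proof. rewrite !Cmod_mul, !Cmod_pow. auto. Qed.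

Lemma q_decomp d gamma N c
  (Hq_supp_z : forall n m, (N < n)%nat -> c n m = Czero)
  (Hq_supp_w : forall n m, (d < m)%nat -> c n m = Czero)
  (Hb_lead : c gamma d = Cone)
  (Hb_deg : forall n, (gamma < n)%nat -> c n d = Czero)
  Rr z w : 1 <= Rr -> inW (alpha_of N d gamma c) Rr z w ->
  exists S, qeval N d c z w = Cadd S (Cmul (Cpow z gamma) (Cpow w d)) /\
    Cmod S <= Kq N d gamma c * (Cmod z ^ gamma * Cmod w ^ d / Rr).
Proof.
  intros HR HW.
  assert (HgN : (gamma <= N)%nat).
  { destruct (le_lt_dec gamma N); auto. exfalso. apply Cone_ne. rewrite <- Hb_lead; auto. }
  set (B := Cmod z ^ gamma * Cmod w ^ d / Rr).
  unfold qeval. rewrite (sum_extract N _ gamma HgN).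
  rewrite (sum_extract d _ d (le_n d)). rewrite Hb_lead, Cmul_one_l.
  eexists. split. rewrite Cadd_assoc. reflexivity.
  eapply Rle_trans. apply Cmod_add.
  unfold Kq. rewrite Rmult_plus_distr_r.
  apply Rplus_le_compat.
  - eapply Rle_trans. apply Cmod_sum.
    rewrite <- sum_scal. apply sum_Rle. intros n Hn.
    rewrite <- sum_scal.
    destruct (Nat.eqb_spec n gamma).
    + rewrite Cmod_zero. apply cond_pos_sum. intros. unfold B.
      apply Rmult_le_pos. apply Cmod_ge0. apply Rle_trans with (Cmod z ^ gamma * Cmod w ^ d * 0).
      lra. destruct HW. apply Rmult_le_compat_l. apply Rmult_le_pos; apply pow_le, Cmod_ge0.
      left; apply Rinv_0_lt_compat; lra.
    + eapply Rle_trans. apply Cmod_sum. apply sum_Rle. intros m Hm.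
      rewrite Cmod_T. apply (TB d gamma N c); auto.
  - eapply Rle_trans. apply Cmod_sum.
    rewrite <- sum_scal. apply sum_Rle. intros m Hm.
    destruct (Nat.eqb_spec m d).
    + rewrite Cmod_zero. unfold B.
      apply Rmult_le_pos. apply Cmod_ge0. apply Rle_trans with (Cmod z ^ gamma * Cmod w ^ d * 0).
      lra. destruct HW. apply Rmult_le_compat_l. apply Rmult_le_pos; apply pow_le, Cmod_ge0.
      left; apply Rinv_0_lt_compat; lra.
    + rewrite Cmod_T. apply (TB d gamma N c); auto.
Qed.

Lemma p_decomp d pc (Hd : (1 <= d)%nat) (Hp_lead : pc d = Cone) z : 1 <= Cmod z ->
  exists S, peval d pc z = Cadd S (Cpow z d) /\
    Cmod S <= sum_f_R0 (fun n => Cmod (pc n)) d * Cmod z ^ (d - 1).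
Proof.
  intros HZ. unfold peval. rewrite (sum_extract d _ d (le_n d)). rewrite Hp_lead, Cmul_one_l.
  eexists; split. reflexivity.
  eapply Rle_trans. apply Cmod_sum. rewrite <- sum_scal. apply sum_Rle. intros n Hn.
  destruct (Nat.eqb_spec n d).
  - rewrite Cmod_zero. apply Rmult_le_pos. apply Cmod_ge0. apply pow_le; lra.
  - rewrite Cmod_mul, Cmod_pow. apply Rmult_le_compat_l. apply Cmod_ge0.
    apply Rle_pow; auto; lia.
Qed.

Lemma W_pos alpha Rr z w : 0 <= Rr -> inW alpha Rr z w -> 0 < Cmod w.
Proof. intros HR [HZ HW]. destruct alpha as [a|].
  - unfold Rpower in HW. pose proof (exp_pos (a * ln (Cmod z))). nra.
  - apply Cmod_pos; auto. Qed.

Theorem lemma6p2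
  (d gamma N : nat) (pc : nat -> Cx) (c : nat -> nat -> Cx)
  (Hd : (2 <= d)%nat)
  (Hgamma : (1 <= gamma)%nat)
  (Hp_lead : pc d = Cone)
  (Hp_deg : forall n, (d < n)%nat -> pc n = Czero)
  (Hq_supp_z : forall n m, (N < n)%nat -> c n m = Czero)
  (Hq_supp_w : forall n m, (d < m)%nat -> c n m = Czero)
  (Hb_lead : c gamma d = Cone)
  (Hb_deg : forall n, (gamma < n)%nat -> c n d = Czero) :
  let p := peval d pc in
  let q := qeval N d c in
  let alpha := alpha_of N d gamma c in
  (forall eps, eps > 0 -> exists R0, forall z w, inW alpha R0 z w ->
      Cmod (Cadd (Cdiv (q z w) (Cmul (Cpow z gamma) (Cpow w d))) (Copp Cone)) < eps)
  /\
  (exists R0, R0 > 1 /\ forall Rr, Rr >= R0 -> forall z w,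
      inW alpha Rr z w -> inW alpha Rr (p z) (q z w)).
Proof.
  cbv zeta.
  pose proof (Kq_ge0 N d gamma c) as HK0. set (K := Kq N d gamma c) in *.
  split.
  - intros eps Heps. exists (1 + K / eps). intros z w HW.
    assert (HR : 0 <= K / eps) by (apply Rmult_le_pos; [lra| left; apply Rinv_0_lt_compat; lra]).
    set (R0 := 1 + K / eps) in *.
    assert (HR1 : 1 <= R0) by (unfold R0; lra).
    destruct (q_decomp d gamma N c Hq_supp_z Hq_supp_w Hb_lead Hb_deg R0 z w ltac:(unfold R0; lra) HW) as [Sq [Hq HS]].
    pose proof (W_pos _ R0 z w ltac:(unfold R0; lra) HW) as HW0.
    destruct HW as [HZ _].
    set (D := Cmul (Cpow z gamma) (Cpow w d)) in *.
    assert (HCD : Cmod D = Cmod z ^ gamma * Cmod w ^ d) by (unfold D; rewrite Cmod_mul, !Cmod_pow; auto).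
    assert (HD0 : 0 < Cmod D) by (rewrite HCD; apply Rmult_lt_0_compat; apply pow_lt; lra).
    rewrite Hq, Cdiv_id by (apply Cmod_pos_ne; auto). rewrite Cmod_div by (apply Cmod_pos_ne; auto).
    rewrite <- HCD in HS.
    apply Rle_lt_trans with (K / R0).
    + apply Rle_trans with (K * (Cmod D / R0) / Cmod D).
      * unfold Rdiv at 1 3. apply Rmult_le_compat_r; auto. left; apply Rinv_0_lt_compat; auto.
      * right. field. split; lra.
    + apply (Rmult_lt_reg_r R0). lra. replace (K / R0 * R0) with K by (field; lra).
      unfold R0. replace (eps * (1 + K / eps)) with (eps + K) by (field; lra). lra.
  - set (P := sum_f_R0 (fun n => Cmod (pc n)) d).
    assert (HP0 : 0 <= P) by (apply cond_pos_sum; intros; apply Cmod_ge0).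
    set (Ca := match alpha_of N d gamma c with Some a => exp (Rabs a * ln 2) | None => 0 end).
    assert (HCa : 0 <= Ca) by (unfold Ca; destruct alpha_of; [left; apply exp_pos| lra]).
    exists (2 + 2 * P + 2 * K + 2 * Ca). split. lra.
    intros Rr HRr z w HW.
    pose proof (W_pos _ Rr z w ltac:(lra) HW) as HW0.
    set (Z := Cmod z) in *. set (W := Cmod w) in *.
    assert (HZ : Z > Rr) by (destruct HW; auto).
    destruct (p_decomp d pc ltac:(lia) Hp_lead z ltac:(unfold Z in *; lra)) as [Sp [Hp HSp]].
    destruct (q_decomp d gamma N c Hq_supp_z Hq_supp_w Hb_lead Hb_deg Rr z w ltac:(lra) HW) as [Sq [Hq HS]].
    fold Z W in HSp, HS. fold P in HSp. fold K in HS.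
    set (D := Cmul (Cpow z gamma) (Cpow w d)) in *.
    assert (HCD : Cmod D = Z ^ gamma * W ^ d) by (unfold D; rewrite Cmod_mul, !Cmod_pow; auto).
    assert (HZd : Z ^ d = Z * Z ^ (d - 1)).
    { replace d with (S (d - 1)) at 1 by lia. reflexivity. }
    assert (HZd1 : 0 < Z ^ (d - 1)) by (apply pow_lt; lra).
    assert (HCpd : Cmod (Cpow z d) = Z ^ d) by (apply Cmod_pow).
    assert (Hpl : Cmod (peval d pc z) >= Z ^ d / 2).
    { rewrite Hp. pose proof (Cmod_lower Sp (Cpow z d)). rewrite HCpd in H.
      assert (P * Z ^ (d - 1) <= Z ^ d / 2) by (rewrite HZd; nra). lra. }
    assert (Hpu : Cmod (peval d pc z) <= 2 * Z ^ d).
    { rewrite Hp. pose proof (Cmod_add Sp (Cpow z d)). rewrite HCpd in H.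
      assert (P * Z ^ (d - 1) <= Z ^ d / 2) by (rewrite HZd; nra).
      assert (0 < Z ^ d) by (apply pow_lt; lra). lra. }
    assert (HZ2 : Z * Z <= Z ^ d).
    { replace (Z * Z) with (Z ^ 2) by ring. apply Rle_pow; [lra|lia]. }
    assert (Hpbig : Cmod (peval d pc z) > Rr) by nra.
    assert (HWd : 0 < W ^ d) by (apply pow_lt; lra).
    assert (HZg : 1 <= Z ^ gamma) by (apply pow_R1_Rle; lra).
    assert (HD0 : 0 < Cmod D) by (rewrite HCD; nra).
    assert (Hql : Cmod (qeval N d c z w) >= Cmod D / 2).
    { rewrite Hq. pose proof (Cmod_lower Sq D).
      assert (K * (Z ^ gamma * W ^ d / Rr) <= Cmod D / 2).
      { rewrite <- HCD. unfold Rdiv. rewrite <- Rmult_assoc, (Rmult_comm K), Rmult_assoc.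
        apply Rmult_le_compat_l. lra.
        apply (Rmult_le_reg_r Rr). lra. rewrite Rmult_assoc, Rinv_l by lra. lra. }
      lra. }
    split; auto.
    destruct (alpha_of N d gamma c) as [a|] eqn:Ha.
    + destruct HW as [_ HWa]. unfold Rpower in *.
      fold Z W in HWa.
      set (e := exp (a * ln Z)) in *.
      assert (He : 0 < e) by apply exp_pos.
      assert (HWde : (Rr * e) ^ d < W ^ d) by (apply pow_strict; [nra|lra|lia]).
      rewrite Rpow_mult_distr in HWde. unfold e in HWde. rewrite exp_pow' in HWde.
      set (E := exp (INR d * (a * ln Z))) in *.
      assert (HE : 0 < E) by apply exp_pos.
      set (pz := peval d pc z) in *.
      assert (Hpz0 : 0 < Cmod pz) by lra.
      assert (HlnZd : ln (Z ^ d) = INR d * ln Z) by (apply ln_pow; lra).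
      assert (Hln2 : 0 < ln 2) by (rewrite <- ln_1; apply ln_increasing; lra).
      assert (Hlu : ln (Cmod pz) <= ln 2 + INR d * ln Z).
      { rewrite <- HlnZd, <- ln_mult by (try apply pow_lt; lra). apply ln_le'; lra. }
      assert (Hll : INR d * ln Z - ln 2 <= ln (Cmod pz)).
      { rewrite <- HlnZd. replace (ln (Z ^ d) - ln 2) with (ln (Z ^ d * / 2)).
        apply ln_le'. apply Rmult_lt_0_compat; [apply pow_lt|]; lra. lra.
        rewrite ln_mult, ln_Rinv by (try apply pow_lt; lra). ring. }
      assert (Hexp : exp (a * ln (Cmod pz)) <= Ca * E).
      { unfold Ca, E. rewrite <- exp_plus. apply exp_le'.
        destruct (Rcase_abs a) as [Hneg|Hpos].
        - rewrite Rabs_left by auto. nra.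
        - rewrite Rabs_right by auto. nra. }
      assert (HRd : Rr * Rr <= Rr ^ d).
      { replace (Rr * Rr) with (Rr ^ 2) by ring. apply Rle_pow; [lra|lia]. }
      assert (HCD2 : Cmod D >= W ^ d) by (rewrite HCD; nra).
      assert (H1 : Rr * Ca <= Rr ^ d / 2) by nra.
      assert (Rr * (Ca * E) <= Rr ^ d * E / 2).
      { replace (Rr * (Ca * E)) with ((Rr * Ca) * E) by ring.
        replace (Rr ^ d * E / 2) with ((Rr ^ d / 2) * E) by field.
        apply Rmult_le_compat_r; lra. }
      assert (Rr * exp (a * ln (Cmod pz)) <= Rr * (Ca * E)) by (apply Rmult_le_compat_l; lra).
      nra.
    + apply Cmod_pos_ne. lra.
Qed.
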